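(* Let $A$ be a finite multiset of $n$ points in $\mathbb{R}^d$ with mean $\mu$, $\varepsilon>0$, $\gamma>0$, and let $i$ be a non-negative integer. Let $P\subset\mathbb{R}^d$ be a finite multiset of points (means) such that at least a $\left(1-\left(\frac{3}{10}\right)^{i+1}\right)$ fraction of them are $\gamma$-good. Then $\textsc{MinSumSelect}(P,i)$ returns a point that is $5^{i+1}\gamma$-good.
   Context: $\mu=\frac1n\sum_{p\in A}p$, $\mathrm{Opt}=\sum_{p\in A}\|p-\mu\|^2$. A point $x$ is $\gamma$-good if $\|x-\mu\|\le\gamma\sqrt{\frac{\varepsilon\,\mathrm{Opt}}{n}}$. $\textsc{ComputeWinner}(Q)$: for each $q_j\in Q$ let $\rho_j$ be the distance from $q_j$ to its $\lceil\frac{7}{10}|Q|\rceil$-th closest point of $Q$, and $D_j=\sum_{q\in Q,\ \|q-q_j\|\le\rho_j}\|q-q_j\|$; output a $q_j$ minimizing $D_j$. $\textsc{MinSumSelect}(P,i)$: if $i=0$ or $|P|=1$, let $W=P$; otherwise split $P$ arbitrarily into $\sqrt{|P|}$ clusters $P_1,\dots,P_{\sqrt{|P|}}$ of size $\sqrt{|P|}$ each and let $W=\{\textsc{MinSumSelect}(P_j,i-1)\}_j$; output $\textsc{ComputeWinner}(W)$. Integrality issues are ignored (all square roots arising in the recursion are treated as integers). *)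

(* Defs.v *)
From HB Require Import structures.
From mathcomp Require Import all_boot all_order all_algebra.
From mathcomp Require Import reals.
Set Implicit Arguments. Unset Strict Implicit. Unset Printing Implicit Defensive.
Import Order.TTheory GRing.Theory Num.Theory.
Local Open Scope ring_scope.

Section Defs.
Variables (R : realType) (d : nat).
Local Notation pt := 'rV[R]_d.

Definition edist (x y : pt) : R :=
  Num.sqrt (\sum_(k < d) (x 0 k - y 0 k) ^+ 2).

Definition mean (A : seq pt) : pt := (size A)%:R^-1 *: \sum_(p <- A) p.

Definition Opt (A : seq pt) : R := \sum_(p <- A) edist p (mean A) ^+ 2.

Definition good (A : seq pt) (eps gamma : R) (x : pt) : bool :=
  edist x (mean A) <= gamma * Num.sqrt (eps * Opt A / (size A)%:R).

(* ceil(7/10 * m) *)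
Definition k710 (m : nat) : nat := ((7 * m + 9) %/ 10)%N.

(* rho: distance from q to its ceil(7|Q|/10)-th closest point of Q
   (Q as a multiset, q itself included at distance 0) *)
Definition rho (Q : seq pt) (q : pt) : R :=
  nth 0 (sort (fun a b : R => a <= b) [seq edist p q | p <- Q]) (k710 (size Q)).-1.

Definition Dsum (Q : seq pt) (q : pt) : R :=
  \sum_(p <- Q | edist p q <= rho Q q) edist p q.

(* x is a possible output of ComputeWinner(Q) (ties broken arbitrarily) *)
Definition winner (Q : seq pt) (x : pt) : Prop :=
  x \in Q /\ forall y, y \in Q -> Dsum Q x <= Dsum Q y.

(* mss P i x : x is a possible output of MinSumSelect(P, i), for some
   arbitrary split of P into sqrt|P| clusters of size sqrt|P| each
   (integrality: only perfect-square sizes can be split) and arbitrary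
   tie-breaking in ComputeWinner. *)
Fixpoint mss (P : seq pt) (i : nat) (x : pt) : Prop :=
  match i with
  | 0 => winner P x
  | i'.+1 =>
      if size P == 1%N then winner P x
      else exists (m : nat) (cl : seq (seq pt)) (W : seq pt),
        (m * m)%N = size P /\ size cl = m /\ all (fun c => size c == m) cl /\
        perm_eq (flatten cl) P /\ size W = m /\
        (forall j, (j < m)%N -> mss (nth [::] cl j) i' (nth 0 W j)) /\
        winner W x
  end.

End Defs.

(* Main.v *)
Require Import Defs.
From HB Require Import structures.
From mathcomp Require Import all_boot all_order all_algebra.
From mathcomp Require Import reals.
From mathcomp Require Import ring lra zify.
Import Order.TTheory GRing.Theory Num.Theory.
Local Open Scope ring_scope.

Module Helpers.
Set Implicit Arguments. Unset Strict Implicit. Unset Printing Implicit Defensive.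
Section H.
Variable R : realType.

Lemma sum_const_seq (I : Type) (s : seq I) (c : R) :
  \sum_(i <- s) c = (size s)%:R * c.
Proof.
elim: s => [|a s IH]; first by rewrite big_nil mul0r.
by rewrite big_cons IH /= -addn1 natrD mulrDl mul1r addrC.
Qed.

Lemma sum_constP_seq (I : Type) (s : seq I) (P : pred I) (c : R) :
  \sum_(i <- s | P i) c = (count P s)%:R * c.
Proof.
elim: s => [|a s IH]; first by rewrite big_nil mul0r.
rewrite big_cons IH /=; case: (P a) => /=; last by rewrite add0n.
by rewrite -addn1 addnC natrD mulrDl mul1r addrC.
Qed.

Lemma dsum_prod (I : Type) (s : seq I) (u v : I -> R) :
  \sum_(i <- s) \sum_(j <- s) u i * v j = (\sum_(i <- s) u i) * (\sum_(j <- s) v j).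
Proof. by rewrite mulr_suml; apply: eq_bigr => i _; rewrite mulr_sumr. Qed.

Lemma dsum3 (I : Type) (s : seq I) (F G H : I -> I -> R) :
  \sum_(i <- s) \sum_(j <- s) (F i j + G i j - H i j) =
  \sum_(i <- s) \sum_(j <- s) F i j + \sum_(i <- s) \sum_(j <- s) G i j
  - \sum_(i <- s) \sum_(j <- s) H i j.
Proof.
under eq_bigr do rewrite sumrB big_split /=.
by rewrite sumrB big_split.
Qed.

Lemma sum_sqr_diff (I : Type) (s : seq I) (f : I -> R) :
  \sum_(i <- s) \sum_(j <- s) (f i - f j) ^+ 2
  = 2 * (size s)%:R * \sum_(i <- s) f i ^+ 2 - 2 * (\sum_(i <- s) f i) ^+ 2.
Proof.
have -> : \sum_(i <- s) \sum_(j <- s) (f i - f j) ^+ 2 =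
   \sum_(i <- s) \sum_(j <- s) (f i ^+ 2 * 1 + 1 * f j ^+ 2 - (2 * f i) * f j).
  by apply: eq_bigr => i _; apply: eq_bigr => j _; ring.
rewrite dsum3 !dsum_prod -mulr_sumr !sum_const_seq expr2; ring.
Qed.

Lemma lagrange (I : Type) (s : seq I) (a b : I -> R) :
  \sum_(i <- s) \sum_(j <- s) (a i * b j - a j * b i) ^+ 2
  = 2 * (\sum_(i <- s) a i ^+ 2) * (\sum_(i <- s) b i ^+ 2)
    - 2 * (\sum_(i <- s) a i * b i) ^+ 2.
Proof.
have -> : \sum_(i <- s) \sum_(j <- s) (a i * b j - a j * b i) ^+ 2 =
   \sum_(i <- s) \sum_(j <- s) (a i ^+ 2 * b j ^+ 2 + b i ^+ 2 * a j ^+ 2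
      - (2 * (a i * b i)) * (a j * b j)).
  by apply: eq_bigr => i _; apply: eq_bigr => j _; ring.
rewrite dsum3 !dsum_prod -mulr_sumr expr2; ring.
Qed.

Lemma cs_seq (I : Type) (s : seq I) (f : I -> R) :
  (\sum_(i <- s) f i) ^+ 2 <= (size s)%:R * \sum_(i <- s) f i ^+ 2.
Proof.
have := sum_sqr_diff s f.
have : 0 <= \sum_(i <- s) \sum_(j <- s) (f i - f j) ^+ 2.
  by apply: sumr_ge0 => i _; apply: sumr_ge0 => j _; apply: sqr_ge0.
move=> H1 H2; rewrite H2 in H1; lra.
Qed.

Lemma cs2_seq (I : Type) (s : seq I) (a b : I -> R) :
  (\sum_(i <- s) a i * b i) ^+ 2 <= (\sum_(i <- s) a i ^+ 2) * (\sum_(i <- s) b i ^+ 2).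
Proof.
have := lagrange s a b.
have : 0 <= \sum_(i <- s) \sum_(j <- s) (a i * b j - a j * b i) ^+ 2.
  by apply: sumr_ge0 => i _; apply: sumr_ge0 => j _; apply: sqr_ge0.
move=> H1 H2; rewrite H2 in H1; lra.
Qed.


Lemma sq_le (u v : R) : 0 <= v -> u ^+ 2 <= v ^+ 2 -> u <= v.
Proof. move=> hv h; nra. Qed.

Variable d : nat.
Local Notation pt := 'rV[R]_d.

Lemma edist_ge0 (x y : pt) : 0 <= edist x y.
Proof. exact: sqrtr_ge0. Qed.

Lemma edist_sqr (x y : pt) : edist x y ^+ 2 = \sum_(k < d) (x 0 k - y 0 k) ^+ 2.
Proof. by rewrite sqr_sqrtr //; apply: sumr_ge0 => k _; apply: sqr_ge0. Qed.

Lemma edist_sym (x y : pt) : edist x y = edist y x.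
Proof.
by rewrite /edist; congr Num.sqrt; apply: eq_bigr => k _; rewrite -sqrrN opprB.
Qed.

Lemma edist_tri (x y z : pt) : edist x y <= edist x z + edist z y.
Proof.
apply: sq_le; first by rewrite addr_ge0 ?edist_ge0.
set a := fun k : 'I_d => x 0 k - z 0 k.
set b := fun k : 'I_d => z 0 k - y 0 k.
have e1 : edist x y ^+ 2 = \sum_(k < d) a k ^+ 2 + 2 * \sum_(k < d) a k * b k
   + \sum_(k < d) b k ^+ 2.
  rewrite edist_sqr mulr_sumr -!big_split /=; apply: eq_bigr => k _.
  rewrite /a /b; ring.
have ea : edist x z ^+ 2 = \sum_(k < d) a k ^+ 2 by rewrite edist_sqr.
have eb : edist z y ^+ 2 = \sum_(k < d) b k ^+ 2 by rewrite edist_sqr.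
have cs := cs2_seq (index_enum 'I_d) a b.
rewrite -ea -eb in cs.
have hab : \sum_(k < d) a k * b k <= edist x z * edist z y.
  apply: sq_le; first by rewrite mulr_ge0 ?edist_ge0.
  by rewrite exprMn.
rewrite e1 -ea -eb; nra.
Qed.


Lemma sum_sqr_diff_le (I : Type) (s : seq I) (f : I -> R) :
  \sum_(i <- s) \sum_(j <- s) (f j - f i) ^+ 2 <= 2 * (size s)%:R * \sum_(i <- s) f i ^+ 2.
Proof.
have -> : \sum_(i <- s) \sum_(j <- s) (f j - f i) ^+ 2 =
          \sum_(i <- s) \sum_(j <- s) (f i - f j) ^+ 2.
  by apply: eq_bigr => i _; apply: eq_bigr => j _; rewrite -sqrrN opprB.
rewrite sum_sqr_diff; have := sqr_ge0 (\sum_(i <- s) f i); lra.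
Qed.

Lemma pair_bound (G : seq pt) (c : pt) (r : R) : 0 <= r ->
  (forall p, p \in G -> edist p c <= r) ->
  (\sum_(q <- G) \sum_(p <- G) edist p q) ^+ 2 <= 2 * (size G)%:R ^+ 4 * r ^+ 2.
Proof.
move=> r0 hG; set g := (size G)%:R.
have g0 : 0 <= g by rewrite /g ler0n.
have h1 : (\sum_(q <- G) \sum_(p <- G) edist p q) ^+ 2 <=
          g ^+ 2 * \sum_(q <- G) \sum_(p <- G) edist p q ^+ 2.
  apply: le_trans (cs_seq _ _) _.
  rewrite expr2 -mulrA ler_wpM2l // mulr_sumr ler_sum // => q _.
  exact: cs_seq.
have h2 : \sum_(q <- G) \sum_(p <- G) edist p q ^+ 2 <= 2 * g * (g * r ^+ 2).
  under eq_bigr do under eq_bigr do rewrite edist_sqr.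
  under eq_bigr do rewrite exchange_big /=.
  rewrite exchange_big /=.
  have -> : \sum_(k < d) \sum_(q <- G) \sum_(p <- G) (p 0 k - q 0 k) ^+ 2 =
     \sum_(k < d) \sum_(q <- G) \sum_(p <- G) ((p 0 k - c 0 k) - (q 0 k - c 0 k)) ^+ 2.
    apply: eq_bigr => k _; apply: eq_bigr => q _; apply: eq_bigr => p _.
    congr (_ ^+ 2); ring.
  apply: (@le_trans _ _ (\sum_(k < d) 2 * g * \sum_(p <- G) (p 0 k - c 0 k) ^+ 2)).
    apply: ler_sum => k _; exact: (sum_sqr_diff_le G (fun p => p 0 k - c 0 k)).
  rewrite -mulr_sumr ler_wpM2l ?mulr_ge0 // exchange_big /=.
  rewrite -sum_const_seq !big_seq; apply: ler_sum => p pG.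
  rewrite -edist_sqr; have := hG p pG; have := edist_ge0 p c; nra.
have h3 := ler_wpM2l (exprn_ge0 2 g0) h2.
apply: le_trans h1 (le_trans h3 _); rewrite le_eqVlt; apply/orP; left; apply/eqP; ring.
Qed.


Definition leR := fun a b : R => a <= b.

Lemma count_sortR (s : seq R) (P : pred R) : count P (sort (fun a b : R => a <= b) s) = count P s.
Proof.
exact: count_sort.
Qed.

Lemma sortedR (s : seq R) : sorted (fun a b : R => a <= b) (sort (fun a b : R => a <= b) s).
Proof. apply: sort_sorted => a b; exact: le_total. Qed.

Lemma sort_nth_le (s : seq R) k (c : R) : (0 < k)%N ->
  leq k (count (fun a : R => a <= c) s) ->
  nth 0 (sort (fun a b : R => a <= b) s) k.-1 <= c.
Proof.
move=> k0 hk; set s' := sort _ s.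
have ss := sortedR s; rewrite -/s' in ss.
have hsz : size s' = size s by rewrite size_sort.
have hcnt : forall P, count P s' = count P s by move=> P; exact: count_sort.
clearbody s'.
have kle : (k <= size s)%N by apply: leq_trans hk (count_size _ _).
rewrite leNgt; apply/negP => hc.
have hd : count (fun a : R => a <= c) (drop k.-1 s') = 0%N.
  apply/eqP; rewrite -leqn0 leqNgt -has_count; apply/negP => /hasP [y].
  move=> /(nthP 0) [j]; rewrite size_drop => hj <-; rewrite nth_drop => hy.
  have : nth 0 s' k.-1 <= nth 0 s' (k.-1 + j).
    apply: (sorted_leq_nth le_trans lexx) => //; rewrite ?unfold_in /=.
    1-3: move: (hj : (j < size s' - k.-1)%N) k0; clear; lia.
  move=> h; have := lt_le_trans hc h; rewrite ltNge hy //.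
have : leq (count (fun a : R => a <= c) s') k.-1.
  rewrite -(cat_take_drop k.-1 s') count_cat hd addn0.
  apply: leq_trans (count_size _ _) _; rewrite size_take; case: ifP => //; lia.
rewrite hcnt; lia.
Qed.

Lemma count_le_sort_nth (s : seq R) k : (0 < k)%N -> (k <= size s)%N ->
  leq k (count (fun a : R => a <= nth 0 (sort (fun a b : R => a <= b) s) k.-1) s).
Proof.
move=> k0 ks; set s' := sort _ s.
have ss := sortedR s; rewrite -/s' in ss.
have hsz : size s' = size s by rewrite size_sort.
have hcnt : forall P, count P s' = count P s by move=> P; exact: count_sort.
clearbody s'.
rewrite -hcnt; set P := (fun a : R => _).
have e : count P s' = (count P (take k s') + count P (drop k s'))%N
  by rewrite -count_cat cat_take_drop.
have hall : all P (take k s').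
  apply/(all_nthP 0) => j; rewrite size_takel ?hsz // => hj.
  rewrite nth_take // /P; apply: (sorted_leq_nth le_trans lexx) => //; rewrite ?unfold_in /=.
  1-3: move: (hj : (j < k)%N) ks k0 (hsz : size s' = size s); clear; lia.
move: hall; rewrite all_count size_takel ?hsz // => /eqP h.
rewrite e h; exact: leq_addr.
Qed.


Lemma count_split (T : Type) (A B : pred T) (s : seq T) :
  (count A s <= count (predI A B) s + count (predC B) s)%N.
Proof. elim: s => //= a s IH; case: (A a); case: (B a) => /=; lia. Qed.

Lemma winner_good (Q : seq pt) (c : pt) (r : R) (x : pt) : 0 <= r ->
  (7 * size Q <= 10 * count (fun q => (edist q c <= r)%R) Q)%N ->
  winner Q x -> edist x c <= 5%:R * r.
Proof.
move=> r0 hcnt [xQ hmin].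
set goodp := (fun q => edist q c <= r) in hcnt.
set m := size Q in hcnt.
set g := count goodp Q in hcnt.
have m1 : (0 < m)%N by rewrite /m; case: (Q) xQ.
have gm : (g <= m)%N by rewrite /g /m count_size.
set k := k710 m.
have kfacts : [/\ (0 < k)%N, (k <= m)%N, (k <= g)%N & (7 * m <= 10 * k)%N].
  rewrite /k /k710; clearbody g m; split; lia.
case: kfacts => k0 km kg k7.
have hb : count (predC goodp) Q = (m - g)%N.
  by apply/eqP; rewrite -(eqn_add2l g) subnKC // /g /m count_predC.
rewrite leNgt; apply/negP => hx.
set e := edist x c - r.
have e4 : 4%:R * r < e by rewrite /e; lra.
set A := (fun p => edist p x <= rho Q x).
have hcA : (k <= count A Q)%N.
  have := @count_le_sort_nth [seq edist p x | p <- Q] k k0.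
  by rewrite size_map count_map => /(_ km).
set cnt := count (predI A goodp) Q.
have hcnt2 : (k <= cnt + (m - g))%N.
  by rewrite -hb; apply: leq_trans hcA (count_split _ _ _).
have Da : e * cnt%:R <= Dsum Q x.
  rewrite /Dsum.
  apply: (@le_trans _ _ (\sum_(p <- Q | A p && goodp p) edist p x)).
    rewrite mulrC -sum_constP_seq; apply: ler_sum => p /andP [_ gp].
    have := edist_tri x c p; rewrite (edist_sym x p); move: gp; rewrite /goodp /e; lra.
  rewrite [X in _ <= X]big_mkcond [X in X <= _]big_mkcond /=.
  apply: ler_sum => p _; rewrite /A; case: (edist p x <= rho Q x) => //=.
  by case: (goodp p) => //; apply: edist_ge0.
have Db : forall q, q \in Q -> goodp q ->
    Dsum Q q <= \sum_(p <- Q | goodp p) edist p q + (m - g)%:R * (2%:R * r).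
  move=> q qQ gq.
  have hrho : rho Q q <= 2%:R * r.
    apply: sort_nth_le => //; rewrite count_map.
    apply: leq_trans kg _; apply: sub_count => p /= gp.
    have := edist_tri p q c; rewrite (edist_sym c q); move: gp gq; rewrite /goodp; lra.
  rewrite -hb -sum_constP_seq /Dsum big_mkcond [X in _ <= X + _]big_mkcond [X in _ <= _ + X]big_mkcond -big_split /=.
  apply: ler_sum => p _; case: ifP => hp; case: ifP => gp /=; rewrite ?addr0 ?add0r //.
  - exact: le_trans hp hrho.
  - exact: edist_ge0.
  - rewrite mulr_ge0 ?ler0n //.
set G := filter goodp Q.
have sG : size G = g by rewrite /G size_filter.
set S := \sum_(q <- G) \sum_(p <- G) edist p q.
have hc : g%:R * Dsum Q x <= S + g%:R * ((m - g)%:R * (2%:R * r)).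
  rewrite /S /G big_filter.
  under [X in _ <= X + _]eq_bigr do rewrite big_filter.
  rewrite -sum_constP_seq -/g -[X in _ <= _ + X]sum_constP_seq -big_split /=.
  rewrite big_seq_cond [X in _ <= X]big_seq_cond; apply: ler_sum => q /andP [qQ gq].
  exact: le_trans (hmin q qQ) (Db q qQ gq).
have hS : S ^+ 2 <= 2 * g%:R ^+ 4 * r ^+ 2.
  rewrite -sG; apply: (pair_bound (c := c)) => // p; rewrite /G mem_filter => /andP [gp _]; exact: gp.
have S0 : 0 <= S by apply: sumr_ge0 => q _; apply: sumr_ge0 => p _; apply: edist_ge0.
have rk7 : 7%:R * m%:R <= 10%:R * k%:R :> R by rewrite -!natrM ler_nat.
have rkg : k%:R <= g%:R :> R by rewrite ler_nat.
have rgm : g%:R <= m%:R :> R by rewrite ler_nat.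
have rk1 : 1 <= k%:R :> R by rewrite ler1n.
have rc : k%:R <= cnt%:R + m%:R - g%:R :> R.
  have hg' : (g <= cnt + m)%N by apply: leq_trans gm (leq_addl _ _).
  by rewrite -natrD -natrB // ler_nat -addnBA.
rewrite natrB // in Db hc.
set T := r * g%:R * (4%:R * k%:R - 6%:R * (m%:R - g%:R)).
have T0 : 0 <= 4%:R * k%:R - 6%:R * (m%:R - g%:R) :> R by lra.
have hST : S <= T.
  apply: sq_le; first by rewrite /T !mulr_ge0 ?ler0n.
  apply: le_trans hS _; rewrite /T !exprMn.
  have : 2 * g%:R ^+ 2 <= (4%:R * k%:R - 6%:R * (m%:R - g%:R)) ^+ 2 :> R.
    have h7 : 10%:R * g%:R <= 7%:R * (4%:R * k%:R - 6%:R * (m%:R - g%:R)) :> R by lra.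
    have g0 : 0 <= g%:R :> R by rewrite ler0n.
    nra.
  move=> h; have r2 := sqr_ge0 r; have g2 := sqr_ge0 (g%:R : R).
  have := ler_wpM2l (mulr_ge0 r2 g2) h; nra.
have g0 : 0 <= g%:R :> R by rewrite ler0n.
have cnt1 : 1 <= cnt%:R :> R.
  rewrite ler1n; clearbody cnt g m k; clear -hcnt2 k7 kg gm k0; lia.
have h1 : g%:R * (e * cnt%:R) <= g%:R * Dsum Q x by rewrite ler_wpM2l.
have h2 : g%:R * (e * cnt%:R) <= r * g%:R * (4%:R * (k%:R - m%:R + g%:R)).
  apply: le_trans h1 (le_trans hc _); rewrite /T in hST.
  have -> : r * g%:R * (4%:R * (k%:R - m%:R + g%:R)) =
     r * g%:R * (4%:R * k%:R - 6%:R * (m%:R - g%:R)) + g%:R * ((m%:R - g%:R) * (2%:R * r)) by ring.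
  by rewrite lerD2r.
have h3 : r * g%:R * (4%:R * (k%:R - m%:R + g%:R)) <= r * g%:R * (4%:R * cnt%:R).
  rewrite ler_wpM2l ?mulr_ge0 //; lra.
have h4 : 0 < (e - 4%:R * r) * (g%:R * cnt%:R).
  rewrite mulr_gt0 //; [lra | rewrite mulr_gt0 //; lra].
have E : (e - 4%:R * r) * (g%:R * cnt%:R) = g%:R * (e * cnt%:R) - r * g%:R * (4%:R * cnt%:R) by ring.
rewrite E in h4; move: h2 h3 h4.
set u := g%:R * (e * cnt%:R); set v := r * g%:R * (4%:R * cnt%:R).
set w := r * g%:R * _; move=> h2 h3 h4; lra.
Qed.

End H.

Section M.
Variable R : realType.

Lemma count_natr (T : Type) (a : pred T) (s : seq T) :
  (count a s)%:R = \sum_(y <- s) ((a y)%:R : R).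
Proof.
elim: s => [|y s IH]; first by rewrite big_nil.
by rewrite big_cons /= natrD IH.
Qed.

Lemma count_nth_natr (T : Type) (x0 : T) (a : pred T) (s : seq T) :
  (count a s)%:R = \sum_(0 <= j < size s) ((a (nth x0 s j))%:R : R).
Proof. by rewrite count_natr (big_nth x0). Qed.

Lemma count_flatten_natr (T : Type) (a : pred T) (cl : seq (seq T)) :
  (count a (flatten cl))%:R = \sum_(0 <= j < size cl) ((count a (nth [::] cl j))%:R : R).
Proof.
have -> : \sum_(0 <= j < size cl) ((count a (nth [::] cl j))%:R : R) =
  \sum_(c <- cl) ((count a c)%:R : R) by rewrite (big_nth [::]).
elim: cl => [|c cl IH]; first by rewrite big_nil.
by rewrite big_cons /= count_cat natrD IH.
Qed.

Lemma num_step (t m S G : R) : 0 < t -> 0 < m ->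
  (1 - 3%:R / 10%:R * t) * (m * m) <= G -> t * m * (m - S) <= m * m - G ->
  7%:R / 10%:R * m <= S.
Proof.
move=> t0 m0 h1 h2.
have h3 : t * m * (m - S) <= t * m * (3%:R / 10%:R * m) by lra.
have tm : 0 < t * m by rewrite mulr_gt0.
rewrite ler_pM2l // in h3; lra.
Qed.

End M.

End Helpers.
Import Helpers.

Theorem lemma4p3 (R : realType) (d : nat) (A : seq 'rV[R]_d) (eps gamma : R)
  (i : nat) (P : seq 'rV[R]_d) :
  (0 < size A)%N -> 0 < eps -> 0 < gamma ->
  (1 - (3%:R / 10%:R : R) ^+ i.+1) * (size P)%:R
    <= (count (good A eps gamma) P)%:R ->
  forall x, mss P i x -> good A eps (5%:R ^+ i.+1 * gamma) x.
Proof.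
move=> nA eps0 g0.
set mu := mean A; set s := Num.sqrt (eps * Opt A / (size A)%:R).
have s0 : 0 <= s by exact: sqrtr_ge0.
rewrite /good -/mu -/s.
have conv : forall (Q : seq 'rV[R]_d) (r : R),
  7%:R / 10%:R * (size Q)%:R <= (count (fun q => edist q mu <= r) Q)%:R :> R ->
  (7 * size Q <= 10 * count (fun q => (edist q mu <= r)%R) Q)%N.
  move=> Q r h; rewrite -(@ler_nat R) !natrM.
  have : (10%:R : R) * (7%:R / 10%:R * (size Q)%:R) = 7%:R * (size Q)%:R.
    by field.
  lra.
elim: i P => [|i IH] P hP x hx.
- rewrite expr1 -mulrA; apply: (winner_good (Q := P)) => //.
    by rewrite mulr_ge0 // ltW.
  apply: conv; move: hP; rewrite expr1.
  have -> : (1 - 3%:R / 10%:R : R) = 7%:R / 10%:R by field.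
  by [].
have t0 : forall n, 0 < (3%:R / 10%:R : R) ^+ n by move=> n; apply: exprn_gt0; lra.
have r0 : 0 <= 5%:R ^+ i.+1 * (gamma * s) by rewrite mulr_ge0 ?exprn_ge0 ?mulr_ge0 // ltW.
have e51 : 1 <= (5%:R : R) ^+ i.+1 by apply: exprn_ege1; lra.
move: hx => /=; case: ifP => [/eqP sz1 | szn].
  move=> hwin.
  have h5 : edist x mu <= 5%:R * (gamma * s).
    apply: (winner_good (Q := P)) => //; first by rewrite mulr_ge0 // ltW.
    rewrite sz1; set cn := count _ P.
    have : (0 < cn)%N.
      rewrite lt0n; apply/negP => /eqP c0; move: hP; rewrite sz1 /cn.
      rewrite /cn in c0; rewrite c0 mulr1.
      have : (3%:R / 10%:R : R) ^+ i.+2 < 1 by rewrite exprn_ilt1 //; lra.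
      lra.
    rewrite /cn; lia.
  apply: le_trans h5 _; rewrite exprS -!mulrA; apply: ler_wpM2l; first lra.
  have gs : 0 <= gamma * s by rewrite mulr_ge0 // ltW.
  by have := ler_wpM2r gs e51; rewrite mul1r.
move=> [m [cl [W [hm [hcl [hall [hperm [hW [hrec hwin]]]]]]]]].
rewrite exprS -!mulrA; apply: (winner_good (Q := W)) => //.
apply: conv; rewrite hW.
have m0 : (0 < m)%N by rewrite -hW; case: hwin; case: (W).
set t := (3%:R / 10%:R : R) ^+ i.+1.
set r' := 5%:R ^+ i.+1 * (gamma * s).
rewrite (@count_nth_natr R _ 0) hW.
set goodP := (fun x0 : 'rV_d => edist x0 mu <= gamma * s).
have hPs : (count goodP P)%:R = \sum_(0 <= j < m) ((count goodP (nth [::] cl j))%:R : R).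
  by rewrite -(permP hperm) count_flatten_natr hcl.
rewrite hPs -hm natrM exprS -/t in hP.
apply: (num_step (t := t) (G := \sum_(0 <= j < m) ((count goodP (nth [::] cl j))%:R : R))) => //.
  exact: t0.
  by rewrite ltr0n.
have hs : forall j, (0 <= j < m)%N ->
   t * m%:R * (1 - ((edist (nth 0 W j) mu <= r')%R : bool)%:R) <=
   m%:R - (count goodP (nth [::] cl j))%:R.
  move=> j /andP [_ jm].
  have szj : size (nth [::] cl j) = m.
    by apply/eqP; apply: (allP hall); apply: mem_nth; rewrite hcl.
  have Gm : (count goodP (nth [::] cl j))%:R <= m%:R :> R.
    by rewrite ler_nat -szj count_size.
  have tm : 0 <= t * m%:R by apply: mulr_ge0; [exact: ltW (t0 _) | exact: ler0n].
  case: (boolP ((1 - t) * m%:R <= (count goodP (nth [::] cl j))%:R)) => hg.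
    have : edist (nth 0 W j) mu <= r'.
      have := IH (nth [::] cl j); rewrite szj => /(_ hg _ (hrec j jm)).
      by rewrite /r' mulrA.
    move=> ->; rewrite subrr mulr0; lra.
  rewrite -ltNge in hg.
  case: (edist (nth 0 W j) mu <= r') => /=; rewrite ?subrr ?mulr0 ?subr0 ?mulr1; lra.
have E1 : \sum_(0 <= j < m) t * m%:R * (1 - ((edist (nth 0 W j) mu <= r')%R : bool)%:R)
   = t * m%:R * (m%:R - \sum_(0 <= j < m) ((edist (nth 0 W j) mu <= r')%R : bool)%:R).
  by rewrite -mulr_sumr sumrB sumr_const_nat subn0.
have E2 : \sum_(0 <= j < m) (m%:R - (count goodP (nth [::] cl j))%:R)
   = m%:R * m%:R - \sum_(0 <= j < m) ((count goodP (nth [::] cl j))%:R : R).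
  by rewrite sumrB sumr_const_nat subn0 mulr_natr.
by have := ler_sum_nat hs; rewrite E1 E2.
Qed.
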